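(* If $X$ is a crowded submaximal (Tychonoff) space, then $B_1(X)$ is a Baire space.
   Context: A space is crowded if it is non-empty and has no isolated points; it is submaximal if every dense subset is open. $B_1(X)$ is the set of all Baire-one real-valued functions on $X$ (pointwise limits of sequences of continuous real-valued functions on $X$) with the topology of pointwise convergence. A space is Baire if every countable intersection of open dense subsets is dense. All spaces are assumed Tychonoff. *)

(* Defs.v *)
From HB Require Import structures.
From mathcomp Require Import all_boot all_order all_algebra.
From mathcomp Require Import all_classical all_reals all_analysis.
Set Implicit Arguments. Unset Strict Implicit. Unset Printing Implicit Defensive.
Import Order.TTheory GRing.Theory Num.Theory numFieldTopology.Exports numFieldNormedType.Exports.
Local Open Scope classical_set_scope.
Local Open Scope ring_scope.

Definition tychonoff_space (R : realType) (X : topologicalType) : Prop :=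
  accessible_space X /\
  forall (a : X) (B : set X), closed B -> ~ B a ->
    exists f : X -> R, continuous f /\ f a = 0 /\ (forall b, B b -> f b = 1).

Definition crowded (X : topologicalType) : Prop :=
  [set: X] !=set0 /\ forall x : X, ~ isolated [set: X] x.

Definition submaximal (X : topologicalType) : Prop :=
  forall D : set X, dense D -> open D.

Definition baire_one (R : realType) (X : topologicalType) (f : X -> R) : Prop :=
  exists fn : nat -> X -> R, (forall n, continuous (fn n)) /\
    forall x, fn n x @[n --> \oo] --> f x.

Definition B1 (R : realType) (X : topologicalType) : set {ptws X -> R} :=
  [set f | baire_one (f : X -> R)].

Definition rel_open (T : topologicalType) (A U : set T) : Prop :=
  exists V, open V /\ U = V `&` A.

Definition rel_dense (T : topologicalType) (A D : set T) : Prop :=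
  forall W : set T, open W -> W `&` A !=set0 -> W `&` (D `&` A) !=set0.

Definition baire_subspace (T : topologicalType) (A : set T) : Prop :=
  forall U : nat -> set T,
    (forall n, U n `<=` A /\ rel_open A (U n) /\ rel_dense A (U n)) ->
    rel_dense A (\bigcap_n U n).

(* Main.v *)
From HB Require Import structures.
Require Import Defs.
From mathcomp Require Import all_boot all_order all_algebra.
From mathcomp Require Import all_classical all_reals all_analysis.
From mathcomp Require Import lra.
Import Order.TTheory GRing.Theory Num.Theory numFieldTopology.Exports numFieldNormedType.Exports.
Set Implicit Arguments. Unset Strict Implicit. Unset Printing Implicit Defensive.
Local Open Scope classical_set_scope.
Local Open Scope ring_scope.

Section Boxes.
Variables (R : realType) (X : topologicalType).

Definition box (h : X -> R) (F : seq X) (e : R) : set {ptws X -> R} :=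
  [set g | forall x, x \in F -> `|h x - g x| < e].

Lemma box_open h F e : open (box h F e).
Proof.
elim: F => [|a F IH].
  have -> : box h [::] e = setT by apply/seteqP; split => g //= _ x.
  exact: openT.
have -> : box h (a :: F) e =
   (@proj X (fun _ => R) a) @^-1` (ball (h a) e) `&` box h F e.
  apply/seteqP; split => g /=.
    move=> H; split; first by rewrite -ball_normE /=; apply: H; rewrite inE eqxx.
    by move=> x xF; apply: H; rewrite inE xF orbT.
  move=> [Ha HF] x; rewrite inE => /orP [/eqP -> | xF]; last exact: HF.
  by move: Ha; rewrite -ball_normE.
apply: openI => //.
apply: open_comp; last exact: ball_open.
move=> g _; exact: proj_continuous.
Qed.

Lemma box_nbhs (f : {ptws X -> R}) (O : set {ptws X -> R}) :
  nbhs f O -> exists F e, 0 < e /\ box f F e `<=` O.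
Proof.
pose G := filter_from [set p : seq X * R | 0 < p.2] (fun p => box f p.1 p.2).
have FG : Filter G.
  apply: filter_from_filter; first by exists ([::], 1) => /=.
  move=> [F1 e1] [F2 e2] /= e10 e20.
  exists (F1 ++ F2, Num.min e1 e2) => /=; first by rewrite lt_min e10 e20.
  move=> g /= H; split => x xF.
    by have := H x; rewrite mem_cat xF /= lt_min => /(_ isT) /andP[].
  by have := H x; rewrite mem_cat xF orbT /= lt_min => /(_ isT) /andP[].
have : {ptws, G --> f}.
  apply/pointwise_cvgP => t A /nbhs_ballP [e /= e0 Ae].
  exists ([:: t], e) => //= g /= H; apply: Ae.
  by rewrite -ball_normE /=; apply: H; rewrite inE.
move=> /(_ O) Hc Of; have [[F e] /= e0 sub] := Hc Of.
by exists F, e.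
Qed.


Lemma closed_dist (a r : R) : 0 < r -> closed [set v : R | `|a - v| <= r].
Proof. move=> r0. have := @closed_ball_closed _ _ a r. by rewrite closed_ballE. Qed.

Definition cbox (h : X -> R) (F : seq X) (e : R) : set {ptws X -> R} :=
  [set g | forall x, x \in F -> `|h x - g x| <= e].

Lemma game (Y : set {ptws X -> R}) (x0 : X)
  (Ext : forall (c : nat -> X) (g : X -> R),
      exists f : {ptws X -> R}, Y f /\ forall n, f (c n) = g (c n)) :
  baire_subspace Y.
Proof.
move=> U HU W oW [w [Ww Yw]].
have : forall n, exists Oo, open Oo /\ U n = Oo `&` Y.
  by move=> n; case: (HU n) => _ [[V [oV ->]] _]; exists V.
move=> HOex; have [Oo HO] := boolp.choice HOex.
have step : forall k (G : set {ptws X -> R}) (L : seq X), open G -> G `&` Y !=set0 ->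
  exists s : {ptws X -> R} * seq X * R, [/\ Y s.1.1, 0 < s.2, s.2 <= k.+1%:R^-1,
     {subset L <= s.1.2} & cbox s.1.1 s.1.2 s.2 `<=` G `&` Oo k].
  move=> k G L oG GY.
  have [_ [_ Hd]] := HU k.
  have [h [Gh [Ukh Yh]]] := Hd G oG GY.
  have Okh : Oo k h by move: Ukh; rewrite (HO k).2 => -[].
  have nb : nbhs h (G `&` Oo k).
    by apply: open_nbhs_nbhs; split; [apply: openI => //; exact: (HO k).1 | split].
  have [F0 [d [d0 sub]]] := box_nbhs nb.
  exists (h, L ++ F0, Num.min (d/2) k.+1%:R^-1) => /=; split => //.
  - by rewrite lt_min invr_gt0 ltr0Sn andbT; lra.
  - by rewrite ge_min lexx orbT.
  - by move=> x xL; rewrite mem_cat xL.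
  - move=> g Hg; apply: sub => x xF0.
    have := Hg x; rewrite mem_cat xF0 orbT => /(_ isT) H.
    have : Num.min (d/2) k.+1%:R^-1 <= d/2 by rewrite ge_min lexx.
    lra.
have : forall p : nat * set {ptws X -> R} * seq X,
  exists s : {ptws X -> R} * seq X * R, open p.1.2 -> p.1.2 `&` Y !=set0 ->
    [/\ Y s.1.1, 0 < s.2, s.2 <= p.1.1.+1%:R^-1,
     {subset p.2 <= s.1.2} & cbox s.1.1 s.1.2 s.2 `<=` p.1.2 `&` Oo p.1.1].
  move=> [[k G] L]; case: (pselect (open G /\ G `&` Y !=set0)) => [[oG GY]|N].
    by have [s Hs] := step k G L oG GY; exists s.
  by exists ((fun=> 0) : {ptws X -> R}, [::], 0) => oG GY; exfalso; apply: N.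
move=> Hex; have [stp Hstp] := boolp.choice Hex.
pose st := fix st (k : nat) : {ptws X -> R} * seq X * R :=
  if k is k'.+1 then stp (k, box (st k').1.1 (st k').1.2 (st k').2, (st k').1.2)
  else stp (0%N, W, [::]).
pose h k := (st k).1.1. pose F k := (st k).1.2. pose e k := (st k).2.
have H0 := Hstp (0%N, W, [::]) oW (ex_intro _ w (conj Ww Yw)).
have base : forall k, Y (h k) /\ 0 < e k.
  elim => [|k [Yk ek]]; first by case: H0.
  have [] // := Hstp (k.+1, box (h k) (F k) (e k), F k).
    exact: box_open.
  exists (h k); split => // x _; by rewrite subrr normr0.
have HS : forall k, [/\ Y (h k.+1), 0 < e k.+1, e k.+1 <= k.+2%:R^-1,
     {subset F k <= F k.+1} & cbox (h k.+1) (F k.+1) (e k.+1) `<=` box (h k) (F k) (e k) `&` Oo k.+1].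
  move=> k; have [Yk ek] := base k.
  apply: (Hstp (k.+1, box (h k) (F k) (e k), F k)); first exact: box_open.
  exists (h k); split => // x _; by rewrite subrr normr0.
have ebound : forall k, e k <= k.+1%:R^-1.
  by case => [|k]; [case: H0 | case: (HS k)].
have cboxO : forall k, cbox (h k) (F k) (e k) `<=` Oo k.
  case => [|k] g Hg; first by case: H0 => _ _ _ _ /(_ g Hg) [].
  by case: (HS k) => _ _ _ _ /(_ g Hg) [].
have cboxW : cbox (h 0%N) (F 0%N) (e 0%N) `<=` W.
  by move=> g Hg; case: H0 => _ _ _ _ /(_ g Hg) [].
have Fmono : forall k j, (k <= j)%N -> {subset F k <= F j}.
  move=> k j /subnK <-; elim: (j - k)%N => [//|n IH] x xF.
  by rewrite addSn; case: (HS (n + k)%N) => _ _ _ /(_ x (IH x xF)).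
have cmono : forall k j, (k <= j)%N -> cbox (h j) (F j) (e j) `<=` cbox (h k) (F k) (e k).
  move=> k j /subnK <-; elim: (j - k)%N => [//|n IH] g Hg.
  apply: IH; move: Hg; rewrite addSn => Hg.
  case: (HS (n + k)%N) => _ _ _ _ /(_ g Hg) [Hb _] x xF.
  exact/ltW/Hb.
have hin : forall k j, (k <= j)%N -> cbox (h k) (F k) (e k) (h j).
  move=> k j kj; apply: (cmono k j kj) => x _.
  by rewrite subrr normr0; exact/ltW/(base j).2.
pose c n := if @unpickle (prod nat nat) n is Some p then nth x0 (F p.1) p.2 else x0.
have cF : forall k x, x \in F k -> exists n, c n = x.
  move=> k x xF; exists (pickle (k, index x (F k))).
  by rewrite /c pickleK /= nth_index.
pose g x := lim (h n x @[n --> \oo]).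
have hcvg : forall k x, x \in F k -> h n x @[n --> \oo] --> g x.
  move=> k x xF; apply: cauchy_cvg; apply: cauchy_exP => eps eps0.
  have [N _ HN] := near_infty_natSinv_lt (PosNum eps0).
  exists (h (maxn N k) x); exists (maxn N k) => // n /= Kn.
  rewrite -ball_normE /=.
  have xK : x \in F (maxn N k) by apply: (Fmono k) => //; exact: leq_maxr.
  have := hin _ _ Kn x xK.
  have := ebound (maxn N k).
  have := HN (maxn N k) (leq_maxl _ _) => /=.
  move=> H1 H2 H3; exact: (le_lt_trans H3 (le_lt_trans H2 H1)).
have hbound : forall k x, x \in F k -> `|h k x - g x| <= e k.
  move=> k x xF.
  apply: (@closed_cvg _ _ _ _ (fun n => h n x) _ (@closed_dist (h k x) (e k) (base k).2) _ _ (hcvg k x xF)).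
  by exists k => // j /= kj; apply: hin.
have [f [Yf Hf]] := Ext c g.
have fbox : forall k, cbox (h k) (F k) (e k) f.
  move=> k x xF; have [n cn] := cF k x xF; rewrite -cn Hf cn.
  exact: hbound.
exists f; split; first exact: cboxW (fbox 0%N).
split => //; move=> n _; rewrite (HO n).2; split => //.
exact: cboxO (fbox n).
Qed.

End Boxes.
Section Ext.
Variables (R : realType) (X : topologicalType).

Lemma psi_exists (tych : tychonoff_space R X) (sm : submaximal X) (c : nat -> X) :
 exists psi : nat -> X -> R,
  [/\ forall n, continuous (psi n),
      forall n i, (i < n)%N -> psi n (c i) = 0,
      forall n, (forall i, (i < n)%N -> c i <> c n) -> psi n (c n) = 1 &
      forall x, (forall j, c j <> x) -> forall n m, (n < m)%N -> psi n x <> 0 -> psi m x = 0].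
Proof.
case: tych => acc tyc.
pose C := [set x | exists j, c j = x].
pose I := interior C. pose D := C `\` I.
pose Fin n := [set x | exists2 i, (i < n)%N & c i = x].
have Fin_closed : forall n, closed (Fin n).
  elim => [|n IH].
    have -> : Fin 0%N = set0 by apply/seteqP; split => x // [].
    exact: closed0.
  have -> : Fin n.+1 = Fin n `|` [set c n].
    apply/seteqP; split => x /=.
      move=> [i]; rewrite ltnS leq_eqVlt => /orP [/eqP -> <-| iN <-]; first by right.
      by left; exists i.
    by move=> [[i iN <-]|->]; [exists i => //; exact: ltnW | exists n].
  by apply: closedU => //; exact: accessible_closed_set1.
have Fin_S : forall n, Fin n `<=` Fin n.+1.
  by move=> n x [i iN <-]; exists i => //; exact: ltnW.
have Dsub_closed : forall E, E `<=` D -> closed E.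
  move=> E ED; rewrite -openC; apply: sm => Obs [y0 Oy0] oO.
  case: (pselect (Obs `&` ~` E !=set0)) => // N; exfalso.
  have OE : Obs `<=` E by move=> y Oy; apply: contrapT => nE; apply: N; exists y.
  have OC : Obs `<=` C by move=> y /OE /ED [].
  move: OC; rewrite (open_subsetE C oO) => OI.
  by have [_ ] := ED y0 (OE y0 Oy0); apply; apply: OI.
have stepE : forall p : nat * set X, exists q : (X -> R) * set X,
  closed p.2 -> p.2 `&` D `<=` Fin p.1 ->
  [/\ continuous q.1, forall i, (i < p.1)%N -> q.1 (c i) = 0,
      (forall i, (i < p.1)%N -> c i <> c p.1) -> q.1 (c p.1) = 1 &
      [/\ closed q.2, p.2 `<=` q.2, q.2 `&` D `<=` Fin p.1.+1,
          forall x, ~ C x -> p.2 x -> q.1 x = 0 &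
          forall x, ~ C x -> q.1 x <> 0 -> q.2 x]].
  move=> [n A] /=.
  case: (pselect (closed A /\ A `&` D `<=` Fin n)) => [[cA AD]|Hbad]; last first.
    by exists (fun=> 0, A) => cA AD; exfalso; apply: Hbad.
  case: (pselect (exists2 i, (i < n)%N & c i = c n)) => [[i0 i0n ci0]|Nnew].
    exists (fun=> 0, A) => _ _; split => //=.
    - by move=> x; exact: cst_continuous.
    - by move=> H; exfalso; apply: (H i0 i0n ci0).
    - by split => //; move=> x /AD /Fin_S.
  have new : forall i, (i < n)%N -> c i <> c n by move=> i iN E; apply: Nnew; exists i.
  case: (pselect (I (c n))) => [Icn | nIcn].
    pose K := ~` I `|` Fin n.
    have cK : closed K by apply: closedU; [apply: open_closedC; exact: open_interior | exact: Fin_closed].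
    have nK : ~ K (c n) by move=> [//|[i iN ci]]; exact: (new i iN ci).
    have [phi [cphi [phi0 phi1]]] := tyc (c n) K cK nK.
    exists (fun x => 1 - phi x, A) => _ _; split => //=.
    - by move=> x; apply: continuousB; [exact: cst_continuous | exact: cphi].
    - by move=> i iN; rewrite phi1 ?subrr //; right; exists i.
    - by rewrite phi0 subr0.
    - split => //; first by move=> x /AD /Fin_S.
        move=> x nC _; rewrite phi1 ?subrr //; left => Ix; apply: nC.
        exact: interior_subset Ix.
      move=> x nC; rewrite phi1 ?subrr //; left => Ix; apply: nC.
      exact: interior_subset Ix.
  have Dcn : D (c n) by split => //; exists n.
  pose K := A `|` (D `\ c n) `|` Fin n.
  have cK : closed K.
    apply: closedU; last exact: Fin_closed.
    apply: closedU => //; apply: Dsub_closed.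
    by move=> x [].
  have nK : ~ K (c n).
    move=> [[Acn|[_ /= //]]|[i iN ci]]; last exact: (new i iN ci).
    by have [i iN ci] := AD (c n) (conj Acn Dcn); exact: (new i iN ci).
  have [phi [cphi [phi0 phi1]]] := tyc (c n) K cK nK.
  pose V := phi @^-1` [set z | z < 2^-1].
  have oV : open V by apply: open_comp; [move=> x _; exact: cphi | exact: open_lt].
  have Vcn : V (c n) by rewrite /V /= phi0 invr_gt0 ltr0Sn.
  have [phi2 [cphi2 [phi20 phi21]]] := tyc (c n) (~` V) (open_closedC oV) (fun H => H Vcn).
  have KnV : forall x, K x -> ~ V x by move=> x Kx; rewrite /V /= phi1 //; lra.
  exists (fun x => 1 - phi2 x, A `|` phi @^-1` [set z | z <= 2^-1]) => _ _; split => //=.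
  - by move=> x; apply: continuousB; [exact: cst_continuous | exact: cphi2].
  - by move=> i iN; rewrite phi21 ?subrr //; apply: KnV; right; exists i.
  - by rewrite phi20 subr0.
  split.
  - apply: closedU => //; apply: preimage_closed; [move=> x _; exact: cphi | exact: closed_le].
  - by move=> x Ax; left.
  - move=> x [[Ax|phix] Dx]; first by apply: Fin_S; apply: AD.
    case: (pselect (x = c n)) => [->|xn]; first by exists n.
    exfalso; have : K x by left; right; split.
    by move=> /phi1 phix1; move: phix; rewrite /= phix1; lra.
  - by move=> x _ Ax; rewrite phi21 ?subrr //; apply: KnV; left; left.
  - move=> x _ H; right; apply: ltW.
    case: (pselect (V x)) => // nV; exfalso; apply: H; by rewrite phi21 ?subrr.
have [stp Hstp] := boolp.choice stepE.
pose As := fix As (n : nat) : set X := if n is n'.+1 then (stp (n', As n')).2 else set0.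
pose psi n := (stp (n, As n)).1.
have inv : forall n, closed (As n) /\ As n `&` D `<=` Fin n.
  elim => [|n [cA AD]]; first by split; [exact: closed0 | move=> x [[]]].
  by have [_ _ _ [cA' _ AD' _ _]] := Hstp (n, As n) cA AD.
have P : forall n, _ := fun n => Hstp (n, As n) (inv n).1 (inv n).2.
have mono : forall n m, (n <= m)%N -> As n `<=` As m.
  move=> n m /subnK <-; elim: (m - n)%N => [//|k IH] x /IH Ax.
  by rewrite addSn; have [_ _ _ [_ sub _ _ _]] := P (k + n)%N; exact: sub.
exists psi; split.
- by move=> n; have [] := P n.
- by move=> n; have [] := P n.
- by move=> n; have [] := P n.
move=> x nC' n m nm psinx.
have nC : ~ C x by move=> [j]; exact: nC'.
have [_ _ _ [_ _ _ _ H3]] := P n.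
have Ax : As n.+1 x := H3 x nC psinx.
have [_ _ _ [_ _ _ H2 _]] := P m.
exact: H2 x nC (mono _ _ nm x Ax).
Qed.


Lemma ext (tych : tychonoff_space R X) (sm : submaximal X) (c : nat -> X) (g : X -> R) :
  exists f : {ptws X -> R}, B1 f /\ forall n, f (c n) = g (c n).
Proof.
have [psi [cpsi psi0 psi1 psi4]] := psi_exists tych sm c.
pose S := fix S (n : nat) : X -> R := if n is n'.+1 then
   (fun x => S n' x + (g (c n') - S n' (c n')) * psi n' x) else (fun=> 0).
have Scont : forall n, continuous (S n).
  elim=> [|n IH] /=; first by move=> x; exact: cst_continuous.
  move=> x; apply: continuousD; first exact: IH.
  by apply: continuousM; [exact: cst_continuous | exact: cpsi].
have Sc : forall N m, (m < N)%N -> S N (c m) = g (c m).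
  elim=> [//|N IH] m; rewrite ltnS leq_eqVlt => /orP [/eqP -> | mN] /=.
    case: (pselect (exists2 i, (i < N)%N & c i = c N)) => [[i iN ci]|H].
      by rewrite -ci IH // subrr mul0r addr0.
    rewrite psi1; first by rewrite mulr1 addrC subrK.
    by move=> i iN E; apply: H; exists i.
  by rewrite psi0 // mulr0 addr0; exact: IH.
have evz : forall x, exists M, forall n, (M <= n)%N -> psi n x = 0.
  move=> x; case: (pselect (exists j, c j = x)) => [[j <-]|nC].
    by exists j.+1 => n jn; exact: psi0.
  case: (pselect (exists n, psi n x <> 0)) => [[n0 H]|H].
    exists n0.+1 => n n0n; apply: (psi4 x _ n0 n) => //.
    by move=> j E; apply: nC; exists j.
  by exists 0%N => n _; apply: contrapT => H'; apply: H; exists n.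
have [M HM] := boolp.choice evz.
have Sconst : forall x n, (M x <= n)%N -> S n x = S (M x) x.
  move=> x n /subnK <-; elim: (n - M x)%N => [//|k IH].
  by rewrite addSn /= HM ?leq_addl // mulr0 addr0.
exists ((fun x => S (M x) x) : {ptws X -> R}); split.
  exists S; split => // x; apply: cvg_near_cst.
  by exists (M x) => // n /= Mn; exact: Sconst.
move=> n /=.
rewrite -(Sconst (c n) (maxn (M (c n)) n.+1)) ?leq_maxl //.
by apply: Sc; exact: leq_maxr.
Qed.

End Ext.

Theorem mainTheorem5 (R : realType) (X : topologicalType) :
  tychonoff_space R X -> crowded X -> submaximal X ->
  baire_subspace (@B1 R X).
Proof.
move=> tych [[x0 _] _] sm.
apply: (@game R X (@B1 R X) x0) => c g.
exact: ext tych sm c g.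
Qed.
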